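(* Let $j = \pm 1$ and let $n$ and $r$ be positive integers. Define \[ \mu_{n} = \prod_{p \mid n,\ p \text{ prime}} p^{1/(p-1)}. \] Then the coefficients of the polynomial \[ \binom{2r}{r}\, {}_{2}F_{1}\!\left(-r,-r+j/n;-2r;n\mu_{n}X\right) \] are algebraic integers.
   Context: ${}_{2}F_{1}(a,b;c;X) = \sum_{s\geq0}\frac{(a)_{s}(b)_{s}}{(c)_{s}\,s!}X^{s}$ with $(y)_{s} = y(y+1)\cdots(y+s-1)$; with $a=-r$ and $c=-2r$ this is the polynomial $\sum_{s=0}^{r}\frac{(-r)_{s}(-r+j/n)_{s}}{(-2r)_{s}\,s!}X^{s}$. *)

(* Defs.v *)
From HB Require Import structures.
From mathcomp Require Import all_boot all_order all_algebra all_field.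
Set Implicit Arguments. Unset Strict Implicit. Unset Printing Implicit Defensive.
Import Order.TTheory GRing.Theory Num.Theory.
Local Open Scope ring_scope.

Definition poch (y : algC) (s : nat) : algC := \prod_(i < s) (y + i%:R).

(* mu_n = prod_{p | n, p prime} p^(1/(p-1)), the positive real (p-1)-th root *)
Definition mu (n : nat) : algC :=
  \prod_(p <- primes n) ((p.-1).-root (p%:R : algC)).

Definition F21 (a b c : algC) (r : nat) : {poly algC} :=
  \poly_(s < r.+1) (poch a s * poch b s / (poch c s * (s`!)%:R)).

Definition lemma_poly (j : int) (n r : nat) : {poly algC} :=
  ('C(2 * r, r))%:R *:
    (F21 (- (r%:R)) (- (r%:R) + (j%:~R) / (n%:R)) (- ((2 * r)%:R)) r
      \Po ((n%:R * mu n) *: 'X)).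

(* Main.v *)
Require Import Defs.
From mathcomp Require Import all_boot all_order all_algebra all_field.
From mathcomp Require Import ring zify.
Import Order.TTheory GRing.Theory Num.Theory.

Lemma legendre_aux (p N : nat) : (0 < p)%N -> forall m,
  ((p.-1) * \sum_(k < N) m %/ p ^ k.+1 <= m)%N.
Proof.
move=> p0; elim: N => [|N IH] m; first by rewrite big_ord0 muln0.
rewrite big_ord_recl /=.
have -> : \sum_(i < N) m %/ p ^ (bump 0 i).+1 = \sum_(i < N) (m %/ p) %/ p ^ i.+1.
  by apply: eq_bigr => k _; rewrite /bump /= add1n expnS divnMA.
have h2 := IH (m %/ p); have h1 := leq_divM m p.
move: h1 h2; rewrite mulnDr.
move: (m %/ p) (\sum_(i < N) (m %/ p) %/ p ^ i.+1) => q S.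
case: p p0 {IH} => // p _ /=; nia.
Qed.

Lemma legendre (p s : nat) : prime p -> ((p.-1) * logn p s`! <= s)%N.
Proof.
move=> pp; rewrite logn_fact // big_add1 /= big_mkord.
exact: legendre_aux (prime_gt0 pp) s.
Qed.

Lemma prod_shift_fact (c s : nat) : (\prod_(k < s) (c.+1 + k) * c`! = (c + s)`!)%N.
Proof.
elim: s => [|s IH]; first by rewrite big_ord0 mul1n addn0.
rewrite big_ord_recr /= mulnAC IH addnS factS; lia.
Qed.

Lemma fact_dvd_prod (c s : nat) : (s`! %| \prod_(k < s) (c + k))%N.
Proof.
case: c => [|c].
  case: s => [|s]; first by rewrite big_ord0.
  by rewrite big_ord_recl /= add0n mul0n dvdn0.
have h := prod_shift_fact c s.
have h2 := bin_fact (leq_addl c s).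
rewrite addnK in h2.
have e : (\prod_(k < s) (c.+1 + k) = 'C(c + s, s) * s`!)%N.
  apply/eqP; rewrite -(eqn_pmul2r (fact_gt0 c)) h -h2; apply/eqP; ring.
by rewrite e dvdn_mull.
Qed.


Local Open Scope ring_scope.
Lemma root_Aint (p : nat) : (1 < p)%N -> (p.-1).-root (p%:R : algC) \in Aint.
Proof.
move=> p1; have k0 : (0 < p.-1)%N by case: p p1 => [|[|p]].
apply: (@root_monic_Aint ('X^(p.-1) - (p%:R)%:P)).
- by rewrite /root !hornerE rootCK // subrr.
- exact: monicXnsubC.
- by rewrite polyOverXnsubC natr_int.
Qed.



Lemma dvdz_prod_congr (M : int) (s : nat) (f g : nat -> int) :
  (forall k, (M %| f k - g k)%Z) ->
  (M %| \prod_(k < s) f k - \prod_(k < s) g k)%Z.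
Proof.
move=> H; elim: s => [|s IH]; first by rewrite !big_ord0 subrr dvdz0.
rewrite !big_ord_recr /=.
have -> : \prod_(i < s) f i * f s - \prod_(i < s) g i * g s =
  (\prod_(i < s) f i - \prod_(i < s) g i) * f s + \prod_(i < s) g i * (f s - g s) by ring.
by apply: rpredD; [apply: dvdz_mulr | apply: dvdz_mull].
Qed.

Lemma Posz_prod (s : nat) (F : nat -> nat) :
  Posz (\prod_(k < s) F k)%N = \prod_(k < s) Posz (F k).
Proof.
elim: s => [|s IH]; first by rewrite !big_ord0.
by rewrite !big_ord_recr /= PoszM IH.
Qed.



Lemma dvd_AP (M n s : nat) (a : int) : coprime M n -> (M %| s`!)%N ->
  (M%:Z %| \prod_(k < s) (a + n%:Z * k%:Z))%Z.
Proof.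
move=> cop Mdv.
have M0 : (M != 0)%N by case: M Mdv {cop} => //; rewrite dvd0n gtn_eqF ?fact_gt0.
have [u [v Huv]] := Bezoutz M n.
have g1 : gcdz M n = 1 by rewrite /gcdz /= (eqP cop).
rewrite g1 in Huv.
have E := divz_eq (a * v) M.
set q := ((a * v) %/ M)%Z in E; set c := ((a * v) %% M)%Z in E.
have c0 : 0 <= c by apply: modz_ge0; rewrite eqz_nat.
have Hc : c = Posz `|c|%N by rewrite gez0_abs.
have key : forall k : nat, (M%:Z %| (a + n%:Z * k%:Z) - n%:Z * (c + k%:Z))%Z.
  move=> k.
  have -> : (a + n%:Z * k%:Z) - n%:Z * (c + k%:Z) = a * (u * M%:Z + v * n%:Z) - n%:Z * c.
    by rewrite Huv; ring.
  have -> : a * (u * M%:Z + v * n%:Z) - n%:Z * c = a * u * M%:Z + n%:Z * (a * v) - n%:Z * c by ring.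
  rewrite E.
  have -> : a * u * M%:Z + n%:Z * (q * M%:Z + c) - n%:Z * c = (a * u + n%:Z * q) * M%:Z by ring.
  exact: dvdz_mull.
have := @dvdz_prod_congr _ s _ _ key.
have -> : \prod_(k < s) (n%:Z * (c + k%:Z)) = n%:Z ^+ s * Posz (\prod_(k < s) (`|c|%N + k))%N.
  rewrite big_split /= prodr_const card_ord Posz_prod; congr (_ * _).
  by apply: eq_bigr => k _; rewrite Hc.
move=> H.
have H2 : (M%:Z %| n%:Z ^+ s * Posz (\prod_(k < s) (`|c|%N + k))%N)%Z.
  apply: dvdz_mull; rewrite /dvdz /=.
  exact: dvdn_trans Mdv (fact_dvd_prod _ _).
have := rpredD H H2; by rewrite subrK.
Qed.


Lemma coef_comp_scaleX (p : {poly algC}) c i :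
  (p \Po (c *: 'X))`_i = p`_i * c ^+ i.
Proof.
rewrite coef_comp_poly.
under eq_bigr => k _ do rewrite exprZn coefZ coefXn.
case: (ltnP i (size p)) => hi.
  rewrite (bigD1 (Ordinal hi)) //= eqxx mulr1 big1 ?addr0 // => k.
  rewrite -val_eqE /= eq_sym => /negbTE ->; by rewrite mulr0 mulr0.
rewrite nth_default // mul0r big1 // => k _.
have : i != k by apply/eqP => e; move: (ltn_ord k); rewrite -e ltnNge hi.
by move/negbTE ->; rewrite !mulr0.
Qed.

Lemma poch_negnat (m i : nat) : (i <= m)%N ->
  poch (- (m%:R)) i = (-1) ^+ i * (m ^_ i)%:R.
Proof.
move=> im; rewrite /poch ffact_prod natr_prod.
have -> : \prod_(k < i) (- (m%:R) + k%:R : algC) = \prod_(k < i) - ((m - k)%:R : algC).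
  apply: eq_bigr => k _; rewrite natrB; first by ring.
  by apply: leq_trans im; apply: ltnW.
by rewrite prodrN card_ord.
Qed.

Lemma poch_b (j : int) (n r i : nat) : (0 < n)%N ->
  (n%:R : algC) ^+ i * poch (- (r%:R) + (j%:~R) / (n%:R)) i =
  (\prod_(k < i) ((j - n%:Z * r%:Z) + n%:Z * k%:Z))%:~R.
Proof.
move=> n0; have -> : (n%:R : algC) ^+ i = \prod_(k < i) (n%:R : algC) by rewrite prodr_const card_ord.
rewrite /poch rmorph_prod /= -big_split /=.
apply: eq_bigr => k _.
have nz : (n%:R : algC) != 0 by rewrite pnatr_eq0 -lt0n.
rewrite !rmorphD /= ?rmorphM /= ?rmorphB /=.
rewrite ?rmorphN ?rmorphM /= -?pmulrn ?mulNrn.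
field; exact: nz.
Qed.

Theorem lemma2p4 (j : int) (n r : nat) :
  (j = 1 \/ j = -1) -> (0 < n)%N -> (0 < r)%N ->
  forall i : nat, (lemma_poly j n r)`_i \in Aint.
Proof.
move=> hj n0 r0 i.
rewrite /lemma_poly coefZ coef_comp_scaleX /F21 coef_poly.
case: ltnP => hi; last by rewrite mul0r mulr0 rpred0.
have ir : (i <= r)%N by rewrite -ltnS.
rewrite poch_negnat // poch_negnat; last by apply: leq_trans ir _; lia.
set P := poch _ i.
set Pz := \prod_(k < i) ((j - n%:Z * r%:Z) + n%:Z * k%:Z).
have Hb : (n%:R : algC) ^+ i * P = Pz%:~R by rewrite poch_b.
have hnat : ('C(2 * r, r) * r ^_ i = 'C(2 * r - i, r) * (2 * r) ^_ i)%N.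
  have pos : (0 < r`! * (r - i)`!)%N by rewrite muln_gt0 !fact_gt0.
  apply/eqP; rewrite -(eqn_pmul2r pos).
  have e1 := bin_fact (leq_addl r r).
  have e2 := ffact_fact ir.
  have e3 : (r <= 2 * r - i)%N by lia.
  have e4 := bin_fact e3.
  have e5 : (i <= 2 * r)%N by lia.
  have e6 := ffact_fact e5.
  have e7 : (2 * r - i - r = r - i)%N by lia.
  have e8 : (r + r - r = r)%N by lia.
  rewrite e7 in e4; rewrite e8 in e1.
  have e9 : (2 * r = r + r)%N by lia.
  apply/eqP.
  transitivity ('C(r + r, r) * (r`! * r`!))%N.
    by rewrite -e2 e9; ring.
  rewrite e1 -e9 -e6 -e4; ring.
have hnatR : ('C(2 * r, r)%:R * (r ^_ i)%:R = 'C(2 * r - i, r)%:R * ((2 * r) ^_ i)%:R :> algC).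
  by rewrite -!natrM hnat.
have fnz : ((i`!)%:R : algC) != 0 by rewrite pnatr_eq0 -lt0n fact_gt0.
have Tnz : (((2 * r) ^_ i)%:R : algC) != 0.
  by rewrite pnatr_eq0 -lt0n ffact_gt0; lia.
have enz : ((-1) ^+ i : algC) != 0 by rewrite expf_neq0 // oppr_eq0 oner_eq0.
have -> : 'C(2 * r, r)%:R *
    ((-1) ^+ i * (r ^_ i)%:R * P / ((-1) ^+ i * ((2 * r) ^_ i)%:R * (i`!)%:R) *
     (n%:R * mu n) ^+ i) =
    ('C(2 * r, r)%:R * (r ^_ i)%:R) * ((n%:R : algC) ^+ i * P) * mu n ^+ i /
      (((2 * r) ^_ i)%:R * (i`!)%:R).
  rewrite exprMn; field; rewrite enz Tnz fnz //.
rewrite hnatR Hb.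
set D := partn (i`!) (\pi(n)); set M := partn (i`!) (\pi(n))^'.
have hDM : (D * M = i`!)%N by rewrite partnC // fact_gt0.
have copM : coprime M n.
  have := coprime_partC (\pi(n))^' (i`!) n.
  by rewrite partnNK partn_pi.
have Mdv : (M %| i`!)%N by rewrite -hDM dvdn_mull.
have := @dvd_AP M n i (j - n%:Z * r%:Z) copM Mdv.
rewrite -/Pz => /dvdzP [Q HQ].
have Mnz : ((M%:R) : algC) != 0.
  by rewrite pnatr_eq0; apply/eqP => M0; move: hDM; rewrite M0 muln0 => /esym/eqP; rewrite gtn_eqF ?fact_gt0.
have Dnz : ((D%:R) : algC) != 0.
  by rewrite pnatr_eq0; apply/eqP => D0; move: hDM; rewrite D0 mul0n => /esym/eqP; rewrite gtn_eqF ?fact_gt0.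
have -> : 'C(2 * r - i, r)%:R * ((2 * r) ^_ i)%:R * Pz%:~R * mu n ^+ i /
      (((2 * r) ^_ i)%:R * (i`!)%:R) =
    'C(2 * r - i, r)%:R * (Q%:~R : algC) * (mu n ^+ i / D%:R).
  rewrite HQ -hDM natrM rmorphM /= -pmulrn.
  field; rewrite Tnz Dnz Mnz //.
apply: rpredM; first by apply: rpredM; [apply: rpred_nat | apply: Aint_int].
have HD : D = (\prod_(p <- primes n) p ^ logn p (i`!))%N.
  rewrite /D (@widen_partn (maxn (i`!) n)) ?leq_maxl //.
  by rewrite -big_filter filter_pi_of // ltnS leq_maxr.
rewrite HD natr_prod /mu -prodrXl -prodf_div.
rewrite big_seq; apply: rpred_prod => p; rewrite mem_primes => /and3P [pp _ _].
have p1 : (1 < p)%N := prime_gt1 pp.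
have k0 : (0 < p.-1)%N by case: p p1 {pp} => [|[|p]].
have hx : (p%:R : algC) = ((p.-1).-root (p%:R : algC)) ^+ p.-1 by rewrite rootCK.
have xnz : (p.-1).-root (p%:R : algC) != 0.
  by rewrite rootC_eq0 // pnatr_eq0 gtn_eqF // ltnW.
rewrite natrX [X in _ / X ^+ _]hx -exprM -expfB_cond.
  by apply: rpredX; apply: root_Aint.
by rewrite (negbTE xnz) add0n legendre.
Qed.
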